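(* Let $X$ be a Banach space. If every point of the unit sphere $S_X$ is a strongly exposed point of $B_X$, then $X$ has property [P].
   Context: A point $x_0\in B_X$ is strongly exposed if there is $x^*\in X^*$ with $\operatorname{Re}x^*(x_0)=\sup_{B_X}\operatorname{Re}x^*$ such that every sequence $\{x_n\}\subset B_X$ with $\operatorname{Re}x^*(x_n)\to\operatorname{Re}x^*(x_0)$ converges in norm to $x_0$; such $x^*$ is a strongly exposing functional, and $\operatorname{SE}(X)$ denotes the set of strongly exposing functionals. $X$ has property [P] if there is a function $\varepsilon\in(0,1)\mapsto\eta(\varepsilon)>0$ such that whenever $x\in S_X$, $x^*\in S_{X^*}$ satisfy $\operatorname{Re}x^*(x)>1-\eta(\varepsilon)$, there exist $y^*\in\operatorname{SE}(X)$ and $y\in S_X$ with $\|y^*\|=y^*(y)=1$, $\|y^*-x^*\|<\varepsilon$ and $\|y-x\|<\varepsilon$. *)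

(* Defs.v *)
From HB Require Import structures.
From mathcomp Require Import all_boot all_order all_algebra.
From mathcomp Require Import all_classical all_reals all_analysis.
From mathcomp Require Import complex.
Set Implicit Arguments. Unset Strict Implicit. Unset Printing Implicit Defensive.
Import Order.TTheory GRing.Theory Num.Theory.
Import numFieldNormedType.Exports.
Local Open Scope classical_set_scope.
Local Open Scope ring_scope.

(* Generic setting: a normed space X over a scalar field K (K = R or K = R[i]),
   with a "real part" map [re : K -> K] (identity for K = R, z |-> (Re z)%:C
   for K = R[i]).  Norms take values in K (real values). *)
Section BanachDefs.
Variables (K : numFieldType) (X : normedModType K) (re : K -> K).

Definition dual_elt (f : {scalar X}) : Prop := continuous f.

Definition dnorm_is (f : X -> K) (c : K) : Prop :=
  (forall x : X, `|x| <= 1 -> `|f x| <= c) /\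
  (forall d : K, (forall x : X, `|x| <= 1 -> `|f x| <= d) -> c <= d).

Definition dnorm_lt (f : X -> K) (e : K) : Prop :=
  exists c : K, dnorm_is f c /\ c < e.

Definition attains_sup_re (f : X -> K) (x0 : X) : Prop :=
  `|x0| <= 1 /\ forall x : X, `|x| <= 1 -> re (f x) <= re (f x0).

Definition strongly_exposes (f : {scalar X}) (x0 : X) : Prop :=
  dual_elt f /\ attains_sup_re f x0 /\
  forall u : nat -> X, (forall n, `|u n| <= 1) ->
    (re (f (u n)) @[n --> \oo] --> re (f x0)) -> (u n @[n --> \oo] --> x0).

Definition strongly_exposed_point (x0 : X) : Prop :=
  exists f : {scalar X}, strongly_exposes f x0.

Definition SE (f : {scalar X}) : Prop := exists x0 : X, strongly_exposes f x0.

Definition property_P : Prop :=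
  exists eta : K -> K,
    (forall e : K, 0 < e < 1 -> 0 < eta e) /\
    forall e : K, 0 < e < 1 ->
    forall (x : X) (f : {scalar X}),
      dual_elt f -> `|x| = 1 -> dnorm_is f 1 -> re (f x) > 1 - eta e ->
      exists (g : {scalar X}) (y : X),
        SE g /\ `|y| = 1 /\ dnorm_is g 1 /\ g y = 1 /\
        dnorm_lt (g \- f) e /\ `|y - x| < e.

End BanachDefs.

Definition re_real (R : realType) : R -> R := fun z => z.
Definition re_cplx (R : realType) : R[i] -> R[i] := fun z => 'Re z.

(* Main.v *)
Require Import Defs.
From HB Require Import structures.
From mathcomp Require Import all_boot all_order all_algebra.
From mathcomp Require Import all_classical all_reals all_analysis.
From mathcomp Require Import complex.
From mathcomp Require Import ring lra.
Set Implicit Arguments. Unset Strict Implicit. Unset Printing Implicit Defensive.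
Import Order.TTheory GRing.Theory Num.Theory.
Import numFieldNormedType.Exports.
Local Open Scope classical_set_scope.
Local Open Scope ring_scope.

Section Arch.
Variable R : realType.
Lemma small_inv (C e : R) : 0 < e -> exists n : nat, C / n.+1%:R < e.
Proof.
move=> e0.
have h := @archi_boundP _ (`|C| / e) (divr_ge0 (normr_ge0 C) (ltW e0)).
exists (Num.Def.archi_bound (`|C| / e)).
set n := Num.Def.archi_bound _ in h *.
have n1 : 0 < n.+1%:R :> R by rewrite ltr0n.
rewrite ltr_pdivrMr //.
rewrite ltr_pdivrMr // in h.
have hC := ler_norm C.
have hn : n%:R < n.+1%:R :> R by rewrite ltr_nat.
nra.
Qed.

Lemma le_of_small (a C : R) : (forall n : nat, a <= C / n.+1%:R) -> a <= 0.
Proof.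
move=> h; rewrite leNgt; apply/negP => a0.
have [n hn] := small_inv C a0; by have := h n; rewrite leNgt hn.
Qed.
End Arch.

Section InfHelp.
Variables (R : realType) (T : Type).
Definition iinf (D : T -> Prop) (F : T -> R) : R := inf [set F t | t in D].

Lemma iinf_le (D : T -> Prop) (F : T -> R) (b : R) t :
  (forall s, D s -> b <= F s) -> D t -> iinf D F <= F t.
Proof.
move=> hb Dt; rewrite /iinf.
have : has_lbound [set F t0 | t0 in D].
  by exists b => _ [s Ds <-]; exact: hb.
move/ge_inf; apply; by exists t.
Qed.

Lemma le_iinf (D : T -> Prop) (F : T -> R) (b : R) :
  (exists t, D t) -> (forall s, D s -> b <= F s) -> b <= iinf D F.
Proof.
move=> [t Dt] hb; rewrite /iinf; apply: lb_le_inf.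
  by exists (F t); exists t.
by move=> _ [s Ds <-]; exact: hb.
Qed.
Lemma le_iinf2 (D1 D2 : T -> Prop) (F1 F2 : T -> R) (c : R) :
  (exists t, D1 t) -> (exists t, D2 t) ->
  (forall s1 s2, D1 s1 -> D2 s2 -> c <= F1 s1 + F2 s2) ->
  c <= iinf D1 F1 + iinf D2 F2.
Proof.
move=> e1 e2 h.
suff : c - iinf D2 F2 <= iinf D1 F1 by move=> h'; lra.
apply: le_iinf => // s1 D1s1.
suff : c - F1 s1 <= iinf D2 F2 by move=> h'; lra.
apply: le_iinf => // s2 D2s2.
have := h _ _ D1s1 D2s2; move=> h'; lra.
Qed.

Lemma le_iinf_scale (D : T -> Prop) (F : T -> R) (a c : R) : 0 < a ->
  (exists t, D t) -> (forall s, D s -> c <= a * F s) -> c <= a * iinf D F.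
Proof.
move=> a0 e h; rewrite -ler_pdivrMl //; apply: le_iinf => // s Ds.
by rewrite ler_pdivrMl //; apply: h.
Qed.
End InfHelp.

Section RealVS.
Variables (R : realType) (V : zmodType) (sc : R -> V -> V).
Hypotheses (scD : forall a x y, sc a (x + y) = sc a x + sc a y)
 (scDl : forall a b x, sc (a + b) x = sc a x + sc b x)
 (scA : forall a b x, sc a (sc b x) = sc (a * b) x)
 (sc1 : forall x, sc 1 x = x).

Lemma sc0 x : sc 0 x = 0.
Proof.
have h := scDl 0 0 x; rewrite addr0 in h.
by apply: (addrI (sc 0 x)); rewrite -h addr0.
Qed.
Lemma scx0 a : sc a 0 = 0.
Proof.
have h := scD a 0 0; rewrite addr0 in h.
by apply: (addrI (sc a 0)); rewrite -h addr0.
Qed.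
Lemma scN1 x : sc (-1) x = - x.
Proof.
apply/eqP; rewrite -subr_eq0 opprK -{2}(sc1 x) -scDl addNr sc0 //.
Qed.
Lemma scNl a x : sc (- a) x = - sc a x.
Proof. by rewrite -mulN1r -scA scN1. Qed.
Lemma scNr a x : sc a (- x) = - sc a x.
Proof. by rewrite -scN1 scA mulrN1 scNl. Qed.
Lemma scBr a x y : sc a (x - y) = sc a x - sc a y.
Proof. by rewrite scD scNr. Qed.

Definition linR (f : V -> R) := forall a x y, f (sc a x + y) = a * f x + f y.

Lemma linR0 f : linR f -> f 0 = 0.
Proof.
move=> lf; have h := lf 1 0 0; rewrite sc1 addr0 mul1r in h.
by apply: (addrI (f 0)); rewrite -h addr0.
Qed.
Lemma linRD f : linR f -> forall x y, f (x + y) = f x + f y.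
Proof. by move=> lf x y; rewrite -{1}(sc1 x) lf mul1r. Qed.
Lemma linRZ f : linR f -> forall a x, f (sc a x) = a * f x.
Proof. by move=> lf a x; rewrite -[sc a x]addr0 lf linR0 // addr0. Qed.
Lemma linRN f : linR f -> forall x, f (- x) = - f x.
Proof. by move=> lf x; rewrite -scN1 linRZ // mulN1r. Qed.
Lemma linRB f : linR f -> forall x y, f (x - y) = f x - f y.
Proof. by move=> lf x y; rewrite linRD // linRN. Qed.

Definition sublin (p : V -> R) := p 0 = 0 /\ (forall x y, p (x + y) <= p x + p y)
  /\ (forall a x, 0 < a -> p (sc a x) <= a * p x).

Lemma sublinZ p : sublin p -> forall a x, 0 <= a -> p (sc a x) = a * p x.
Proof.
move=> [p0 [pD pZ]] a x; rewrite le_eqVlt => /orP[/eqP <-|a0].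
  by rewrite sc0 p0 mul0r.
apply/eqP; rewrite eq_le pZ //=.
have := pZ a^-1 (sc a x); rewrite invr_gt0 scA mulVf ?gt_eqF // sc1 => /(_ a0).
by rewrite -(ler_pM2l a0) mulrA mulfV ?gt_eqF // mul1r.
Qed.

Lemma sublin_lb p : sublin p -> forall x, - p (- x) <= p x.
Proof.
move=> [p0 [pD _]] x; have := pD x (- x); rewrite subrr p0.
move=> h; lra.
Qed.

Definition qaux (q : V -> R) (y : V) (x : V) : R :=
  iinf (fun t : R => 0 <= t) (fun t => q (x + sc t y) - t * q y).

Lemma qaux_lb q y : sublin q -> forall x t, 0 <= t ->
  - q (- x) <= q (x + sc t y) - t * q y.
Proof.
move=> sq x t t0; have [q0 [qD qZ]] := sq.
have := qD (x + sc t y) (- x); rewrite addrC addKr sublinZ //.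
move=> h; lra.
Qed.

Lemma qaux_sublin q y : sublin q -> sublin (qaux q y).
Proof.
move=> sq; have [q0 [qD qZ]] := sq; rewrite /sublin /qaux.
have ex0 : exists t : R, 0 <= t by exists 0.
split; [|split].
- apply/eqP; rewrite eq_le; apply/andP; split.
    have := @iinf_le R R (fun t => 0 <= t) (fun t => q (0 + sc t y) - t * q y)
      (- q (- 0)) 0 (qaux_lb y sq 0) (lexx 0).
    by rewrite sc0 addr0 q0 mul0r subr0.
  apply: le_iinf => // t t0; rewrite add0r sublinZ // subrr //.
- move=> x1 x2.
  apply: le_iinf2 => // t1 t2 t1p t2p.
  apply: (@le_trans _ _ (q (x1 + x2 + sc (t1 + t2) y) - (t1 + t2) * q y)).
    by apply: (iinf_le (qaux_lb y sq (x1 + x2))); rewrite addr_ge0.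
  have := qD (x1 + sc t1 y) (x2 + sc t2 y).
  have -> : x1 + sc t1 y + (x2 + sc t2 y) = x1 + x2 + sc (t1 + t2) y.
    by rewrite scDl addrACA.
  move=> h; lra.
- move=> a x a0.
  apply: le_iinf_scale => // t t0.
  apply: (@le_trans _ _ (q (sc a x + sc (a * t) y) - (a * t) * q y)).
    by apply: (iinf_le (qaux_lb y sq (sc a x))); rewrite mulr_ge0 // ltW.
  by rewrite -scA -scD (sublinZ sq _ (ltW a0)) mulrBr mulrA.
Qed.

Lemma qaux_le q y : sublin q -> forall x, qaux q y x <= q x.
Proof.
move=> sq x; have := iinf_le (qaux_lb y sq x) (lexx 0).
by rewrite sc0 addr0 mul0r subr0.
Qed.

Lemma qaux_Ny q y : sublin q -> qaux q y (- y) <= - q y.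
Proof.
move=> sq; have := iinf_le (qaux_lb y sq (- y)) ler01.
rewrite sc1 addNr (proj1 sq) mul1r sub0r //.
Qed.

(* minimal sublinear functionals are linear: Zorn *)
Lemma sublin_linear_below p : sublin p ->
  exists f, linR f /\ forall x, f x <= p x.
Proof.
move=> sp.
pose T := {r : V -> R | sublin r /\ forall x, r x <= p x}.
pose t0 : T := exist _ p (conj sp (fun x => lexx (p x))).
pose Rr (a b : T) : bool := `[< forall x, sval b x <= sval a x >].
have lbT (s : T) x : - p (- x) <= sval s x.
  case: s => r [sr rp] /=; apply: le_trans (sublin_lb sr x).
  by rewrite lerN2.
have [r rmax] : exists t, premaximal (fun a b => Rr a b) t.
  apply: (ZL_preorder t0).
  - by move=> t; apply/asboolP => x.
  - move=> a b c /asboolP hab /asboolP hbc; apply/asboolP => x.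
    exact: le_trans (hbc x) (hab x).
  - move=> A Atot.
    have [[s0 As0]|nA] := pselect (exists s, A s); last first.
      by exists t0 => s As; exfalso; apply: nA; exists s.
    pose m x := iinf A (fun s : T => sval s x).
    have mle s x : A s -> m x <= sval s x.
      by move=> As; apply: (@iinf_le _ _ A (fun s : T => sval s x) _ s (fun s _ => lbT s x)).
    have sz (s : T) : sval s 0 = 0 by case: s => r [[]].
    have sm : sublin m.
      split; [|split].
      + apply/eqP; rewrite eq_le; apply/andP; split.
          by have := mle s0 0 As0; rewrite sz.
        by apply: le_iinf => [|s _]; [exists s0| rewrite sz].
      + move=> x y; apply: le_iinf2; [by exists s0|by exists s0|].
        move=> s1 s2 As1 As2.
        have [/asboolP h|/asboolP h] := Atot _ _ As1 As2.
        * apply: le_trans (mle _ _ As2) _.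
          case: (s2) h => r2 [[_ [r2D _]] _] /= h.
          by apply: le_trans (r2D x y) _; rewrite lerD2r.
        * apply: le_trans (mle _ _ As1) _.
          case: (s1) h => r1 [[_ [r1D _]] _] /= h.
          by apply: le_trans (r1D x y) _; rewrite lerD2l.
      + move=> a x a0; apply: le_iinf_scale => //; first by exists s0.
        move=> s As; apply: le_trans (mle _ _ As) _.
        by case: (s) => r [[_ [_ rZ]] _] /=; apply: rZ.
    have mp x : m x <= p x.
      exact: le_trans (mle _ _ As0) (proj2 (svalP s0) x).
    exists (exist _ m (conj sm mp)) => s As; apply/asboolP => x /=.
    exact: mle.
case: r rmax => r [sr rp] rmax.
have rN z : r (- z) = - r z.
  have sq := qaux_sublin z sr.
  have qp x : qaux r z x <= p x := le_trans (qaux_le z sr x) (rp x).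
  have := rmax (exist _ (qaux r z) (conj sq qp)).
  have h1 : Rr (exist _ r (conj sr rp)) (exist _ (qaux r z) (conj sq qp)).
    by apply/asboolP => x /=; apply: qaux_le.
  move=> /(_ h1) /asboolP /= /(_ (- z)) h2.
  have h3 := qaux_Ny z sr.
  have h4 := sublin_lb sr z.
  apply/eqP; rewrite eq_le; apply/andP; split; [exact: le_trans h2 h3|].
  by rewrite lerNl.
have rD x y : r (x + y) = r x + r y.
  apply/eqP; rewrite eq_le; apply/andP; split; first exact: (proj1 (proj2 sr)).
  have := (proj1 (proj2 sr)) (- x) (- y); rewrite -opprD !rN.
  by rewrite -opprD lerN2.
have rZ a x : r (sc a x) = a * r x.
  have [a0|a0] := leP 0 a; first exact: sublinZ.
  have na : 0 <= - a by lra.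
  by rewrite -(opprK a) scNl rN (sublinZ sr _ na) opprK mulNr opprK.
exists r; split => // a x y; by rewrite rD rZ.
Qed.

Theorem hahn_banach_sublin q y : sublin q ->
  exists f, linR f /\ (forall x, f x <= q x) /\ f y = q y.
Proof.
move=> sq; have [f [lf fle]] := sublin_linear_below (qaux_sublin y sq).
exists f; split => //; split.
  by move=> x; apply: le_trans (fle x) (qaux_le y sq x).
apply/eqP; rewrite eq_le; apply/andP; split.
  by apply: le_trans (fle y) (qaux_le y sq y).
have := le_trans (fle (- y)) (qaux_Ny y sq); rewrite linRN //.
by rewrite lerN2.
Qed.

Section BP.
Variable (N : V -> R).
Hypotheses (N_ge0 : forall x, 0 <= N x) (ND : forall x y, N (x + y) <= N x + N y)
 (NZ : forall a x, N (sc a x) = `|a| * N x) (N0 : forall x, N x = 0 -> x = 0).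
Hypothesis (Ncomplete : forall u : nat -> V,
  (forall e, 0 < e -> exists M, forall m n, (M <= m)%N -> (M <= n)%N -> N (u m - u n) < e) ->
  exists l, forall e, 0 < e -> exists M, forall n, (M <= n)%N -> N (u n - l) < e).

Lemma N00 : N 0 = 0.
Proof. by rewrite -(sc0 0) NZ normr0 mul0r. Qed.
Lemma Nopp x : N (- x) = N x.
Proof. by rewrite -scN1 NZ normrN normr1 mul1r. Qed.
Lemma NB x y : N (x - y) = N (y - x).
Proof. by rewrite -Nopp opprB. Qed.
Lemma Ntri x y z : N (x - z) <= N (x - y) + N (y - z).
Proof. by have := ND (x - y) (y - z); rewrite addrA subrK. Qed.

Section Max.
Variables (phi : V -> R) (k : R).
Hypotheses (lphi : linR phi) (phiN : forall x, phi x <= N x) (k0 : 0 < k).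

Definition Kc v := N v <= k * phi v.
Lemma Kc0 : Kc 0.
Proof. by rewrite /Kc N00 (linR0 lphi) mulr0. Qed.
Lemma KcD v w : Kc v -> Kc w -> Kc (v + w).
Proof.
rewrite /Kc (linRD lphi) mulrDr => hv hw.
by apply: le_trans (ND v w) _; apply: lerD.
Qed.

Lemma BP_max x0 : N x0 <= 1 -> exists y, N y <= 1 /\ Kc (y - x0) /\
  forall z, N z <= 1 -> Kc (z - y) -> z = y.
Proof.
move=> hx0.
pose S w z := N z <= 1 /\ Kc (z - w).
have Strans a b c : S a b -> Kc (c - b) -> N c <= 1 -> S a c.
  move=> [_ hab] hcb hc; split => //.
  by have := KcD hcb hab; rewrite addrA subrK.
have phiB := linRB lphi.
have step : forall wn : V * nat, exists z, N wn.1 <= 1 -> S wn.1 z /\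
    (forall z', S wn.1 z' -> phi z' <= phi z + (wn.2.+1%:R)^-1).
  move=> [w n] /=; have [hw|hw] := pselect (N w <= 1); last by exists w.
  pose E := [set phi z | z in S w].
  have hs : has_sup E.
    split; first by exists (phi w); exists w => //; split => //; rewrite subrr; exact: Kc0.
    by exists 1 => _ [z [hz _] <-]; apply: le_trans (phiN z) hz.
  have ep : 0 < (n.+1%:R : R)^-1 by rewrite invr_gt0 ltr0n.
  have [e [z Sz <-] he] := sup_adherent ep hs.
  exists z => _; split => // z' Sz'.
  have := sup_upper_bound hs; move=> /(_ (phi z')) hz'.
  have : phi z' <= sup E by apply: hz'; exists z'.
  move=> h1; clear hz'; move: he h1; set a := sup E; set b := n.+1%:R^-1; move=> he h1; lra.
have [nxt hnxt] := choice step.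
pose u := fix u n := if n is m.+1 then nxt (u m, m) else x0.
have uS : forall n, N (u n) <= 1 /\ S (u n) (u n.+1) /\
    (forall z', S (u n) z' -> phi z' <= phi (u n.+1) + (n.+1%:R)^-1).
  elim => [|n [hn [Sn Pn]]].
    by have [h1 h2] := hnxt (x0, 0%N) hx0; split.
  have [h1 h2] := hnxt (u n.+1, n.+1) (proj1 Sn); split => //; exact: (proj1 Sn).
have uSlt : forall n m, (n < m)%N -> S (u n) (u m).
  move=> n; elim => [//|m IH]; rewrite ltnS leq_eqVlt => /orP[/eqP <-|hnm].
    exact: (proj1 (proj2 (uS n))).
  have [_ [[h1 h2] _]] := uS m.
  exact: Strans (IH hnm) h2 h1.
have KcU : forall n m, (n <= m)%N -> Kc (u m - u n).
  move=> n m; rewrite leq_eqVlt => /orP[/eqP <-|hnm]; first by rewrite subrr; exact: Kc0.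
  exact: (proj2 (uSlt _ _ hnm)).
have cauchy1 : forall n m, (n.+1 <= m)%N -> N (u m - u n.+1) <= k / n.+1%:R.
  move=> n m hnm.
  have hS : S (u n) (u m) by apply: uSlt; apply: leq_trans hnm.
  have := (proj2 (proj2 (uS n))) _ hS.
  have := KcU _ _ hnm; rewrite /Kc phiB => h1 h2.
  apply: le_trans h1 _; move: h2; set b := n.+1%:R^-1; move=> h2.
  rewrite ler_pM2l //; lra.
have [y hy] : exists y, forall e, 0 < e -> exists M, forall n, (M <= n)%N -> N (u n - y) < e.
  apply: Ncomplete => e e0.
  have [n0 hn0] := small_inv (2 * k) e0.
  exists n0.+1 => m n hm hn.
  apply: le_lt_trans (Ntri _ (u n0.+1) _) _.
  rewrite (NB (u n0.+1)).
  have := cauchy1 _ _ hm; have := cauchy1 _ _ hn.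
  move: hn0; set b := n0.+1%:R^-1 => hn0 h1 h2; lra.
have ylim : forall n, N (y - u n.+1) <= k / n.+1%:R.
  move=> n; apply/ler_addgt0Pr => e e0.
  have [M hM] := hy e e0; have := hM (maxn M n.+1) (leq_maxl _ _).
  have := cauchy1 n (maxn M n.+1) (leq_maxr _ _).
  have := Ntri y (u (maxn M n.+1)) (u n.+1); rewrite (NB y).
  set b := n.+1%:R^-1; move=> h1 h2 h3; rewrite NB in h3; lra.
have Ny : N y <= 1.
  apply/ler_addgt0Pr => e e0.
  have [M hM] := hy e e0; have := hM M (leqnn M).
  have := ND (u M) (y - u M); rewrite addrC subrK (NB y).
  have := proj1 (uS M); move=> h1 h2 h3; lra.
have Kcy : forall n, Kc (y - u n).
  move=> n; rewrite /Kc; apply/ler_addgt0Pr => e e0.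
  have e1 : 0 < e / (1 + k) by rewrite divr_gt0 // addr_gt0.
  have h6 : (1 + k) * (e / (1 + k)) = e by rewrite mulrC -mulrA mulVf ?mulr1 // gt_eqF // addr_gt0.
  move: e1 h6; set d := e / (1 + k) => e1 h6.
  have [M hM] := hy _ e1; set m := maxn M n.
  have h1 := hM m (leq_maxl _ _).
  have h2 := KcU n m (leq_maxr _ _); rewrite /Kc phiB in h2.
  have h3 := Ntri y (u m) (u n).
  have h1' : N (y - u m) < d by rewrite NB.
  have h4 := phiN (u m - y); rewrite phiB in h4.
  have h7 : k * (phi (u m) - phi y) <= k * N (u m - y) by rewrite ler_pM2l.
  have h8 : k * N (u m - y) <= k * d by rewrite ler_pM2l // ltW.
  rewrite phiB; lra.
exists y; split => //; split.
  by have := Kcy 0%N.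
move=> z hz Kz; apply/eqP; rewrite -subr_eq0; apply/eqP; apply: N0.
apply/eqP; rewrite eq_le N_ge0 andbT.
apply: (@le_of_small _ _ (k * (k + 1))) => n.
have Sz : S (u n) z by apply: Strans Kz hz; split => //; exact: Kcy.
have h1 := (proj2 (proj2 (uS n))) _ Sz.
have h2 := ylim n.
have h3 := phiN (u n.+1 - y); rewrite phiB in h3.
rewrite /Kc phiB in Kz.
rewrite (NB y) in h2.
move: h1 h2; set b := n.+1%:R^-1 => h1 h2.
have h5 : k * (phi z - phi y) <= k * (k * b + b) by rewrite ler_pM2l //; lra.
lra.
Qed.

End Max.


Lemma BPB_core (phi : V -> R) (x0 : V) (eps : R) :
  linR phi -> (forall x, `|phi x| <= N x) -> 0 < eps -> eps < 1 -> N x0 <= 1 ->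
  256%:R * (1 - phi x0) < eps * eps ->
  exists psi y, linR psi /\ (forall x, `|psi x| <= N x) /\ N y = 1 /\ psi y = 1 /\
   (forall x, `|psi x - phi x| <= eps / 2 * N x) /\ N (y - x0) < eps.
Proof.
move=> lphi phiN e0 e1 hx0 hphi.
have phiN' x : phi x <= N x by apply: le_trans (ler_norm _) (phiN x).
set A := phi x0 in hphi.
have AN : A <= 1 by apply: le_trans (phiN' x0) hx0.
have ee1 : eps * eps < eps by rewrite gtr_pMr.
have A12 : 255%:R / 256%:R <= A.
  rewrite ler_pdivrMr ?ltr0n //; lra.
have A0 : 0 < A by apply: lt_le_trans A12; rewrite divr_gt0 ?ltr0n.
pose k := 64%:R / eps.
have k0 : 0 < k by rewrite divr_gt0 // ltr0n.
have ek : eps * k = 64%:R by rewrite /k mulrC -mulrA mulVf ?mulr1 // gt_eqF.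
have phiB := linRB lphi.
have phiD := linRD lphi.
have phiZ := linRZ lphi.
have KcD' := KcD (k:=k) lphi.
have [y [Ny [Kyx ymax]]] := BP_max lphi phiN' k0 hx0.
have ekA : eps * (k * A) = 64%:R * A by rewrite mulrA ek.
have kA : 1 <= k * A.
  have : 63%:R <= eps * (k * A) by rewrite ekA; move: A12; rewrite ler_pdivrMr ?ltr0n //; lra.
  move=> h; nra.
have Kx0 : Kc phi k x0 by rewrite /Kc; apply: le_trans hx0 kA.
pose q z := iinf (fun c => Kc phi k c) (fun c => N (z + c)).
have ex0 : exists c, Kc phi k c by exists 0; exact: (Kc0 k lphi).
have qlb z c : Kc phi k c -> 0 <= N (z + c) by move=> _; exact: N_ge0.
have qle z c : Kc phi k c -> q z <= N (z + c) by apply: (iinf_le (qlb z)).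
have qN z : q z <= N z by have := qle z 0 (Kc0 k lphi); rewrite addr0.
have KcZ a c : 0 <= a -> Kc phi k c -> Kc phi k (sc a c).
  rewrite /Kc NZ phiZ => a0 h; rewrite ger0_norm // mulrCA.
  exact: ler_wpM2l.
have sq : sublin q.
  split; [|split].
  - apply/eqP; rewrite eq_le; apply/andP; split; first by rewrite -N00; apply: qN.
    by apply: le_iinf => // c _; exact: N_ge0.
  - move=> x1 x2; apply: le_iinf2 => // c1 c2 h1 h2.
    apply: le_trans (qle _ _ (KcD' _ _ h1 h2)) _.
    by rewrite addrACA; apply: ND.
  - move=> a x a0; apply: le_iinf_scale => // c hc.
    apply: le_trans (qle _ _ (KcZ _ _ (ltW a0) hc)) _.
    by rewrite -scD NZ gtr0_norm.
have [psi [lpsi [psiq psiy]]] := hahn_banach_sublin y sq.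
have psiN x : `|psi x| <= N x.
  rewrite ler_norml; apply/andP; split; last by apply: le_trans (psiq x) (qN x).
  rewrite lerNl -(linRN lpsi) -Nopp; apply: le_trans (psiq _) (qN _).
have psiK c : Kc phi k c -> 0 <= psi c.
  move=> hc; have := le_trans (psiq (- c)) (qle _ _ hc).
  by rewrite addNr N00 (linRN lpsi) oppr_le0.
have qy : q y = 1.
  apply/eqP; rewrite eq_le; apply/andP; split; first exact: le_trans (qN y) Ny.
  apply: le_iinf => // c hc; rewrite leNgt; apply/negP => hlt.
  pose t := 1 - N (y + c).
  have t0 : 0 < t by rewrite subr_gt0.
  have hz : N (y + c + sc t x0) <= 1.
    apply: le_trans (ND _ _) _; rewrite NZ gtr0_norm //.
    have : t * N x0 <= t by rewrite ger_pMr.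
    rewrite /t; lra.
  have ee : y + c + sc t x0 - y = c + sc t x0.
    by rewrite addrC !addrA addNr add0r.
  have hK : Kc phi k (y + c + sc t x0 - y).
    by rewrite ee; apply: KcD' => //; apply: KcZ => //; exact: ltW.
  have hz' := ymax _ hz hK.
  have h : c + sc t x0 = 0 by rewrite -ee hz' subrr.
  have := congr1 phi h; rewrite phiD phiZ (linR0 lphi) => h'.
  have hc' : 0 <= phi c.
    by move: hc; rewrite /Kc => h2; have := N_ge0 c; move=> h3; nra.
  have : 0 < t * A by apply: mulr_gt0 => //; lra.
  rewrite -/A in h'; lra.

have psiy1 : psi y = 1 by rewrite psiy qy.
have Ny1 : N y = 1.
  apply/eqP; rewrite eq_le Ny /=; rewrite -psiy1; apply: le_trans (ler_norm _) (psiN y).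
have Nyx : N (y - x0) < eps.
  have h1 : N (y - x0) <= k * (1 - A).
    apply: le_trans Kyx _; rewrite ler_pM2l // phiB lerD2r -Ny1; exact: phiN'.
  apply: le_lt_trans h1 _.
  rewrite -(ltr_pM2l e0) mulrA ek; lra.
pose D := k * A - 1.
have hD : 31%:R <= eps * D by rewrite /D mulrBr ekA mulr1; move: A12; rewrite ler_pdivrMr ?ltr0n //; lra.
have D0 : 0 < D by nra.
pose iD := D^-1.
have iD0 : 0 < iD by rewrite invr_gt0.
have DiD : D * iD = 1 by rewrite mulfV // gt_eqF.
have iDe : iD <= eps / 31%:R.
  rewrite ler_pdivlMr ?ltr0n //; nra.
pose iA := A^-1.
have iA0 : 0 < iA by rewrite invr_gt0.
have AiA : A * iA = 1 by rewrite mulfV // gt_eqF.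
have iA2 : iA <= 2%:R by nra.
have iA1 : iA - 1 <= eps / 128%:R.
  rewrite ler_pdivlMr ?ltr0n //.
  have : iA - 1 = iA * (1 - A) by rewrite mulrBr mulr1 (mulrC iA A) AiA.
  move=> ->; nra.
have psix0 : `|psi x0| <= 1 := le_trans (psiN x0) hx0.
have kerlb v : phi v = 0 -> - (N v * iD) <= psi v.
  move=> hv; pose t := N v * iD.
  have t0 : 0 <= t by rewrite mulr_ge0 // ltW.
  have tD : t * D = N v by rewrite /t -mulrA (mulrC iD) DiD mulr1.
  have Kw : Kc phi k (v + sc t x0).
    rewrite /Kc phiD phiZ hv add0r -/A.
    apply: le_trans (ND _ _) _; rewrite NZ ger0_norm //.
    have : t * N x0 <= t by rewrite ler_piMr.
    have -> : k * (t * A) = t * D + t by rewrite /D mulrBr mulr1 subrK mulrCA.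
    move=> h; lra.
  have := psiK _ Kw; rewrite (linRD lpsi) (linRZ lpsi).
  have : t * psi x0 <= t.
    by apply: le_trans (ler_wpM2l t0 (le_trans (ler_norm _) psix0)) _; rewrite mulr1.
  move=> h1 h2; rewrite -/t; lra.
have kerb v : phi v = 0 -> `|psi v| <= N v * iD.
  move=> hv; rewrite ler_norml kerlb //=.
  have := kerlb (- v); rewrite (linRN lphi) hv oppr0 Nopp (linRN lpsi) => /(_ erefl).
  by rewrite lerN2.
have dec x : exists v r, phi v = 0 /\ psi x = psi v + r * psi x0 /\ phi x = r * A /\
    N v <= 3%:R * N x.
  pose r := phi x * iA; exists (x - sc r x0), r.
  have rA : r * A = phi x by rewrite /r -mulrA (mulrC iA) AiA mulr1.
  split; [|split; [|split]].
  - by rewrite phiB phiZ -/A rA subrr.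
  - by rewrite (linRB lpsi) (linRZ lpsi) subrK.
  - by rewrite rA.
  - apply: le_trans (ND _ _) _; rewrite Nopp NZ.
    have hr : `|r| <= 2%:R * N x.
      rewrite /r normrM (gtr0_norm iA0) mulrC.
      by apply: ler_pM; [exact: ltW|exact: normr_ge0|exact: iA2|exact: phiN].
    have := N_ge0 x0; have := normr_ge0 r; move=> h1 h2; nra.
pose c := psi x0 * iA.
have cA : psi x0 = c * A by rewrite /c -mulrA (mulrC iA) AiA mulr1.
have c0 : 0 <= c by apply: mulr_ge0; [exact: psiK|exact: ltW].
have c1 : c - 1 <= eps / 128%:R.
  have : c <= iA by rewrite /c ger_pMl //; apply: le_trans (ler_norm _) psix0.
  lra.
have c2 : - (3%:R * iD) <= c - 1.
  have [v [r [hv [hps [hph hN]]]]] := dec y.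
  have := kerb v hv; rewrite ler_norml => /andP[hv1 hv2].
  have hphiy : r * A <= 1 by rewrite -hph -Ny1; exact: phiN'.
  rewrite psiy1 cA in hps; rewrite Ny1 mulr1 in hN.
  have h3 : N v * iD <= 3%:R * iD by rewrite ler_pM2r.
  have h4 : 0 <= c * (1 - r * A) by apply: mulr_ge0 => //; lra.
  have h5 : r * (c * A) = c * (r * A) by rewrite mulrCA.
  rewrite h5 in hps.
  lra.
exists psi, y; split => //; split => //; split => //; split => //; split => //.
move=> x; have [v [r [hv [hps [hph hN]]]]] := dec x.
have -> : psi x - phi x = psi v + phi x * (c - 1).
  by rewrite hps cA hph; ring.
apply: le_trans (ler_normD _ _) _; rewrite normrM.
have h1 := kerb v hv.
have h2 : `|c - 1| <= 3%:R * iD + eps / 128%:R.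
  rewrite ler_norml; apply/andP; split.
    have : 0 <= eps / 128%:R by rewrite divr_ge0 ?ler0n // ltW.
    lra.
  have : 0 <= 3%:R * iD by rewrite mulr_ge0 ?ler0n // ltW.
  lra.
have h3 : `|phi x| * `|c - 1| <= N x * (3%:R * iD + eps / 128%:R).
  by apply: ler_pM => //; exact: phiN.
have h4 : N v * iD <= 3%:R * N x * iD by rewrite ler_pM2r.
have h5 : 6%:R * iD + eps / 128%:R <= eps / 2.
  lra.
have := N_ge0 x; move=> h6.
nra.
Qed.

End BP.
End RealVS.

Lemma mk_scalar (K : numFieldType) (X : normedModType K) (F : X -> K) :
  (forall a u v, F (a *: u + v) = a * F u + F v) ->
  exists g : {scalar X}, forall v, g v = F v.
Proof.
move=> hF.
have lF : linear_for *%R F by move=> a u v; rewrite hF.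
pose g : {scalar X} := HB.pack F (GRing.isLinear.Build K X K *%R F lF).
by exists g.
Qed.

Section Aux.
Variable R : realFieldType.
Implicit Types s t c p q n d b r e : R.

Lemma aux1 s t c p q n : 0 < s -> 0 < t -> s * (1 + t * c) = 1 ->
  `|p| <= n -> `|q| <= c * n -> `|s * (p + t * q)| <= 1 * n.
Proof.
move=> s0 t0 hs hp hq; rewrite normrM (gtr0_norm s0) mul1r.
apply: le_trans (ler_wpM2l (ltW s0) (ler_normD _ _)) _.
rewrite normrM (gtr0_norm t0).
have : t * `|q| <= t * (c * n) by rewrite ler_pM2l.
have := normr_ge0 p; have := normr_ge0 q.
move=> *; nra.
Qed.

Lemma aux2 s t c p q n d : 0 < s -> 0 < t -> 0 <= d -> s * (1 + d) = 1 -> t * c = d ->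
  `|p| <= n -> `|q| <= c * n -> `|s * (p + t * q) - p| <= 2%:R * d * n.
Proof.
move=> s0 t0 d0 hs htc hp hq.
have -> : s * (p + t * q) - p = s * (t * q - d * p).
  have e1 : p = s * (1 + d) * p by rewrite hs mul1r.
  rewrite {2}e1; ring.
rewrite normrM (gtr0_norm s0).
have h1 : `|t * q - d * p| <= t * (c * n) + d * n.
  apply: le_trans (ler_normB _ _) _; rewrite !normrM (gtr0_norm t0) (ger0_norm d0).
  by apply: lerD; [rewrite ler_pM2l|apply: ler_wpM2l].
have s1 : s <= 1 by nra.
have n0 : 0 <= n by apply: le_trans (normr_ge0 _) hp.
have := normr_ge0 (t * q - d * p).
rewrite mulrA htc in h1.
move=> *; nra.
Qed.

Lemma aux3 s t c p b r e : 0 < s -> 0 < t -> s * (1 + t * c) = 1 -> p <= 1 -> b <= c ->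
  r = s * (p + t * b) -> `|1 - r| < e * (s * t) -> `|c - b| < e.
Proof.
move=> s0 t0 hs hp hb -> h.
have st0 : 0 < s * t by rewrite mulr_gt0.
rewrite ger0_norm ?subr_ge0 //.
have h1 : s * t * (c - b) <= 1 - s * (p + t * b).
  rewrite -{1}hs; nra.
have h2 := ler_norm (1 - s * (p + t * b)).
have : s * t * (c - b) < e * (s * t) by lra.
by rewrite mulrC ltr_pM2r.
Qed.
End Aux.

Section Generic.
Variables (R : realType) (K : numFieldType) (X : completeNormedModType K).
Variables (iota : {rmorphism R -> K}) (rp : K -> R) (re : K -> K).
Hypotheses
 (iota_le : forall a b : R, (iota a <= iota b) = (a <= b))
 (iota_norm : forall a : R, `|iota a| = iota `|a|)
 (rp_iota : forall a, rp (iota a) = a)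
 (rpD : forall z w, rp (z + w) = rp z + rp w)
 (rpM : forall a z, rp (iota a * z) = a * rp z)
 (normK : forall z : K, `|z| = iota (rp `|z|))
 (rp_le : forall z, rp z <= rp `|z|)
 (re_def : forall z, re z = iota (rp z))
 (RP : forall z a, rp z = a -> `|z| <= iota a -> z = iota a)
 (CX : forall psi : X -> R, (forall a u v, psi (iota a *: u + v) = a * psi u + psi v) ->
        exists g : {scalar X}, forall v, rp (g v) = psi v)
 (NL : forall L : X -> K, (forall a u v, L (a *: u + v) = a * L u + L v) ->
        forall c : R, (forall v, `|rp (L v)| <= c * rp `|v|) -> forall v, `|L v| <= iota c * `|v|).

Lemma iota_inj : injective iota.
Proof. by move=> a b /eqP; rewrite eq_le !iota_le -eq_le => /eqP. Qed.
Lemma iota_lt a b : (iota a < iota b) = (a < b).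
Proof. by rewrite !lt_def iota_le (inj_eq iota_inj). Qed.
Lemma rp0 : rp 0 = 0.
Proof. by rewrite -(rmorph0 iota) rp_iota. Qed.
Lemma rpN z : rp (- z) = - rp z.
Proof. by apply/eqP; rewrite -subr_eq0 opprK -rpD addNr rp0. Qed.
Lemma rpB z w : rp (z - w) = rp z - rp w.
Proof. by rewrite rpD rpN. Qed.
Lemma rp_norm_le z : `|rp z| <= rp `|z|.
Proof.
rewrite ler_norml rp_le andbT; have := rp_le (- z); rewrite rpN normrN.
by rewrite lerNl.
Qed.
Lemma ge0_iota z : 0 <= z -> z = iota (rp z).
Proof.
by move=> z0; have := normK z; rewrite ger0_norm.
Qed.

Definition sc (a : R) (v : X) := iota a *: v.
Definition NN (v : X) := rp `|v|.
Lemma normNN v : `|v| = iota (NN v).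
Proof. exact: ge0_iota. Qed.

Lemma sc_D a x y : sc a (x + y) = sc a x + sc a y.
Proof. by rewrite /sc scalerDr. Qed.
Lemma sc_Dl a b x : sc (a + b) x = sc a x + sc b x.
Proof. by rewrite /sc rmorphD scalerDl. Qed.
Lemma sc_A a b x : sc a (sc b x) = sc (a * b) x.
Proof. by rewrite /sc scalerA rmorphM. Qed.
Lemma sc_1 x : sc 1 x = x.
Proof. by rewrite /sc rmorph1 scale1r. Qed.
Lemma NN_ge0 x : 0 <= NN x.
Proof. by rewrite -iota_le rmorph0 -normNN. Qed.
Lemma NN_D x y : NN (x + y) <= NN x + NN y.
Proof. by rewrite -iota_le rmorphD -!normNN ler_normD. Qed.
Lemma NN_Z a x : NN (sc a x) = `|a| * NN x.
Proof. by apply: iota_inj; rewrite rmorphM -!normNN /sc normrZ iota_norm. Qed.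
Lemma NN_0 x : NN x = 0 -> x = 0.
Proof. by move=> h; apply/eqP; rewrite -normr_eq0 normNN h rmorph0. Qed.

Lemma NN_complete (u : nat -> X) :
  (forall e, 0 < e -> exists M, forall m n, (M <= m)%N -> (M <= n)%N -> NN (u m - u n) < e) ->
  exists l, forall e, 0 < e -> exists M, forall n, (M <= n)%N -> NN (u n - l) < e.
Proof.
move=> hc.
have cu : cvg (u @ \oo).
  apply: cauchy_cvg; apply: cauchy_exP => e e0.
  have e' : 0 < rp e by rewrite -iota_lt rmorph0 -ge0_iota // ltW.
  have [M hM] := hc _ e'.
  exists (u M); exists M => // n hn /=.
  rewrite -ball_normE /= normNN (ge0_iota (ltW e0)) iota_lt.
  by apply: hM.
exists (lim (u @ \oo)) => e e0.
move/cvgrPdist_lt: cu => /(_ (iota e)); rewrite -(rmorph0 iota) iota_lt => /(_ e0).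
move=> [M _ hM]; exists M => n hn.
by rewrite -iota_lt -normNN -normrN opprB; apply: hM.
Qed.


Lemma scalar_lin (f : {scalar X}) a u v : f (a *: u + v) = a * f u + f v.
Proof. by rewrite linearP. Qed.
Lemma scalarZ' (f : {scalar X}) a u : f (a *: u) = a * f u.
Proof. by rewrite -[a *: u]addr0 scalar_lin linear0 addr0. Qed.

Lemma dnorm_bound (f : {scalar X}) c : dnorm_is f c -> forall v, `|f v| <= c * `|v|.
Proof.
move=> [hb _] v; have [->|v0] := eqVneq v 0.
  by rewrite linear0 !normr0 mulr0.
have h1 : `| `|v|^-1 *: v| <= 1 by rewrite normfZV.
have := hb _ h1.
rewrite scalarZ' normrM normfV normr_id.
have nv : 0 < `|v| by rewrite normr_gt0.
by rewrite ler_pdivrMl // mulrC.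
Qed.

Lemma dnorm_of_bound (L : X -> K) (b : R) : 0 <= b -> L 0 = 0 ->
  (forall v, `|L v| <= iota b * `|v|) -> exists c0, dnorm_is L c0 /\ c0 <= iota b.
Proof.
move=> b0 L0 hb.
pose S := [set rp `|L v| | v in [set v : X | `|v| <= 1]].
have Sne : S !=set0 by exists (rp `|L 0|); exists 0; rewrite /= ?normr0 ?ler01.
have ib0 : 0 <= iota b by rewrite -(rmorph0 iota) iota_le.
have Sub : ubound S b.
  move=> _ [v hv <-]; rewrite -iota_le -normK.
  by apply: le_trans (hb v) _; apply: ler_piMr.
have hs : has_sup S by split => //; exists b.
exists (iota (sup S)); split; [split|].
- move=> v hv; rewrite normK iota_le; apply: (sup_upper_bound hs).
  by exists v.
- move=> d hd.
  have d0 : 0 <= d.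
    have h0 : `|0 : X| <= 1 by rewrite normr0 ler01.
    by have := hd 0 h0; rewrite L0 normr0.
  rewrite (ge0_iota d0) iota_le; apply: ge_sup Sne _ => _ [v hv <-].
  by rewrite -iota_le -normK -ge0_iota //; exact: hd.
- by rewrite iota_le; apply: ge_sup Sne Sub.
Qed.

Lemma cont_of_bound (L : {scalar X}) : (forall v, `|L v| <= `|v|) -> continuous L.
Proof.
move=> hb v; apply/cvgrPdist_lt => e e0.
have /cvgrPdist_lt/(_ e e0) := @cvg_id _ (nbhs v).
apply: filterS => w hw.
by rewrite -linearB; apply: le_lt_trans (hb _) hw.
Qed.


Theorem gen_main :
  (forall x : X, `|x| = 1 -> @strongly_exposed_point K X re x) -> @property_P K X re.
Proof.
move=> hSE.
exists (fun e => e * e / 256%:R); split.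
  by move=> e /andP[e0 _]; rewrite divr_gt0 ?mulr_gt0 ?ltr0n.
move=> e /andP[e0 e1] x f fdual xn fn hfx.
pose eps := rp e.
have eE : e = iota eps by apply: ge0_iota; exact: ltW.
have eps0 : 0 < eps by rewrite -iota_lt rmorph0 -eE.
have eps1 : eps < 1 by rewrite -iota_lt rmorph1 -eE.
have fb := dnorm_bound fn.
pose phi v := rp (f v).
have sD := sc_D; have sDl := sc_Dl; have sA := sc_A; have s1 := sc_1.
have lphi : linR sc phi.
  by move=> a u v; rewrite /phi /sc scalar_lin rpD rpM.
have phiN v : `|phi v| <= NN v.
  apply: le_trans (rp_norm_le _) _; rewrite -iota_le -normK -normNN.
  by have := fb v; rewrite mul1r.
have Nx : NN x <= 1 by rewrite /NN xn -(rmorph1 iota) rp_iota.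
have hphix : 256%:R * (1 - phi x) < eps * eps.
  have h : iota (1 - eps * eps / 256%:R) = 1 - e * e / 256%:R.
    by rewrite eE rmorphB rmorph1 fmorph_div rmorphM rmorph_nat.
  move: hfx; rewrite -h re_def iota_lt -/(phi x) => h2.
  lra.
have [psi [y [lpsi [psiN [Ny [psiy [psiphi Nyx]]]]]]] :=
  BPB_core sD sDl sA s1 NN_ge0 NN_D NN_Z NN_0 NN_complete lphi phiN eps0 eps1 Nx hphix.
have [g hg] := CX lpsi.
have gb v : `|g v| <= `|v|.
  have := NL (@scalar_lin g) (c:=1) _ v; rewrite rmorph1 mul1r; apply.
  by move=> w; rewrite hg mul1r; exact: psiN.
have yn : `|y| = 1 by rewrite normNN Ny rmorph1.
have gy : g y = 1.
  rewrite -(rmorph1 iota); apply: RP; first by rewrite hg.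
  by rewrite rmorph1 -yn; exact: gb.
have [h [hdual [[_ hsup] hseq]]] := hSE y yn.
pose c := rp (h y).
have hsup' v : `|v| <= 1 -> rp (h v) <= c by move=> hv; rewrite -iota_le -!re_def; exact: hsup.
have NN0 : NN 0 = 0 by rewrite /NN normr0 rp0.
have hbound v : rp (h v) <= c * NN v.
  have [->|v0] := eqVneq v 0; first by rewrite linear0 rp0 NN0 mulr0.
  have nv : 0 < NN v by rewrite lt_def NN_ge0 andbT; apply/eqP => /NN_0; apply/eqP.
  pose w := iota (NN v)^-1 *: v.
  have hw : `|w| <= 1.
    rewrite normrZ iota_norm normNN -rmorphM gtr0_norm ?invr_gt0 // mulVf ?gt_eqF //.
    by rewrite rmorph1.
  have := hsup' w hw; rewrite /w scalarZ' rpM.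
  by rewrite ler_pdivrMl // mulrC.
have hbabs v : `|rp (h v)| <= c * NN v.
  rewrite ler_norml hbound andbT lerNl.
  by have := hbound (- v); rewrite linearN rpN /NN normrN.
have c0 : 0 < c.
  have c0' : 0 <= c by have := hbabs y; rewrite /NN yn -(rmorph1 iota) rp_iota mulr1; apply: le_trans.
  rewrite lt_def c0' andbT; apply/eqP => cz.
  have hu : forall n : nat, `|(fun _ : nat => - y) n| <= 1 by move=> n; rewrite normrN yn.
  have hc : re (h ((fun _ : nat => - y) n)) @[n --> \oo] --> re (h y).
    have -> : re (h (- y)) = re (h y).
      rewrite !re_def -/c cz; congr (iota _).
      have := hbabs (- y); rewrite cz mul0r normr_le0 => /eqP ->; by [].
    exact: cvg_cst.
  have := hseq _ hu hc; move/cvgrPdist_lt => /(_ 1 ltr01) [M _ hM].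
  have := hM M (leqnn M); rewrite /= opprK -mulr2n normrMn yn.
  move=> hlt; have h2 : (1 : K) <= 1 + 1 by rewrite lerDl ler01.
  by have := lt_le_trans hlt h2; rewrite ltxx.
have hnorm v : `|h v| <= iota c * `|v|.
  by apply: NL => //; exact: scalar_lin.
have hy : h y = iota c.
  by apply: RP => //; rewrite -[X in _ <= X]mulr1 -yn; exact: hnorm.
pose d := eps / 8%:R.
have d0 : 0 < d by rewrite divr_gt0 ?ltr0n.
pose s := (1 + d)^-1.
have s0 : 0 < s by rewrite invr_gt0 addr_gt0.
have hs : s * (1 + d) = 1 by rewrite mulVf // gt_eqF // addr_gt0.
pose t := d / c.
have t0 : 0 < t by rewrite divr_gt0.
have tc : t * c = d by rewrite /t -mulrA mulVf ?mulr1 // gt_eqF.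
have hs' : s * (1 + t * c) = 1 by rewrite tc.
pose G v := iota s * (g v + iota t * h v).
have Glin a u v : G (a *: u + v) = a * G u + G v.
  by rewrite /G !scalar_lin; ring.
have [g' hg'] := mk_scalar Glin.
have rpG v : rp (g' v) = s * (psi v + t * rp (h v)).
  by rewrite hg' /G rpM rpD rpM hg.
have g'y : g' y = 1.
  rewrite hg' /G gy hy -rmorphM -(rmorph1 iota) -rmorphD -rmorphM.
  by rewrite (rmorph1 iota) hs' rmorph1.
have g'lin := @scalar_lin g'.
have g'b v : `|g' v| <= `|v|.
  have := NL g'lin (c:=1) _ v; rewrite rmorph1 mul1r; apply => w.
  by rewrite rpG; apply: (aux1 s0 t0 hs' (psiN w) (hbabs w)).
have g'g v : `|rp (g' v) - psi v| <= 2%:R * d * NN v.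
  by rewrite rpG; apply: (aux2 s0 t0 (ltW d0) hs tc (psiN v) (hbabs v)).
have g'f v : `|g' v - f v| <= iota (3%:R * eps / 4%:R) * `|v|.
  have Llin a u w : (g' (a *: u + w) - f (a *: u + w)) = a * (g' u - f u) + (g' w - f w).
    by rewrite !scalar_lin; ring.
  apply: (NL Llin) => w.
  rewrite rpB -/(phi w).
  have -> : rp (g' w) - phi w = (rp (g' w) - psi w) + (psi w - phi w) by ring.
  apply: le_trans (ler_normD _ _) _.
  have := g'g w; have := psiphi w; have := NN_ge0 w.
  rewrite -/(NN w) /d => *; lra.
exists g', y; split; [|split; [exact: yn|split; [|split; [exact: g'y|split]]]].
- exists y; split; first exact: cont_of_bound.
  split.
    split; first by rewrite yn.
    move=> v hv; rewrite !re_def iota_le g'y -(rmorph1 iota) rp_iota.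
    apply: le_trans (rp_le _) _; rewrite -iota_le -normK (rmorph1 iota).
    exact: le_trans (g'b v) hv.
  move=> u hu hcv; apply: hseq => //.
  apply/cvgrPdist_lt => ee ee0.
  have ee' : 0 < ee * iota (s * t) by rewrite mulr_gt0 // -(rmorph0 iota) iota_lt mulr_gt0.
  move/cvgrPdist_lt: hcv => /(_ _ ee'); apply: filterS => n hn.
  rewrite !re_def -!rmorphB iota_norm in hn *.
  rewrite (ge0_iota (ltW ee0)) -rmorphM iota_lt in hn *.
  rewrite g'y -(rmorph1 iota) rp_iota in hn.
  rewrite iota_norm iota_lt -/c.
  apply: (aux3 s0 t0 hs' _ _ _ hn).
  + have := psiN (u n); rewrite ler_norml => /andP[_ h1]; apply: le_trans h1 _.
    by rewrite -iota_le -normNN (rmorph1 iota).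
  + have := hbound (u n); move=> h1; apply: le_trans h1 _.
    apply: ler_piMr; first exact: ltW.
    by rewrite -iota_le -normNN (rmorph1 iota); exact: hu.
  + by rewrite rpG.
- split.
    by move=> v hv; apply: le_trans (g'b v) hv.
  move=> dd hd; have := hd y; rewrite yn lexx g'y normr1; apply => //.
- have L0 : (g' \- f) 0 = 0.
    by rewrite /= !linear0; exact: (addr0 0).
  have b0 : 0 <= 3%:R * eps / 4%:R by apply: divr_ge0; [apply: mulr_ge0; [exact: ler0n|exact: ltW]|exact: ler0n].
  have [c1 [hc1 hc1b]] := dnorm_of_bound b0 L0 g'f.
  exists c1; split => //; apply: le_lt_trans hc1b _.
  rewrite eE iota_lt; lra.
- by rewrite normNN eE iota_lt.
Qed.

End Generic.

Lemma real_case (R : realType) (X : completeNormedModType R) :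
  (forall x : X, `|x| = 1 -> @strongly_exposed_point R X (@re_real R) x) ->
  @property_P R X (@re_real R).
Proof.
apply: (@gen_main R R X (idfun : {rmorphism R -> R}) (fun z => z) (@re_real R)).
- by [].
- by [].
- by [].
- by [].
- by [].
- by [].
- by move=> z; exact: ler_norm.
- by [].
- by move=> z a /= ->.
- by move=> psi hpsi; apply: mk_scalar => a u v; apply: hpsi.
- by move=> L _ c hc v; apply: hc.
Qed.

Section Cplx.
Variables (R : realType) (X : completeNormedModType R[i]).
Local Open Scope complex_scope.

Lemma c_norm (a : R) : `|a%:C| = `|a|%:C.
Proof. by rewrite normc_def /= expr0n /= addr0 sqrtr_sqr. Qed.

Lemma c_rpD (z w : R[i]) : complex.Re (z + w) = complex.Re z + complex.Re w.
Proof. by case: z => ? ?; case: w => ? ? /=. Qed.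

Lemma c_rpM (a : R) (z : R[i]) : complex.Re (a%:C * z) = a * complex.Re z.
Proof. by case: z => x y /=; rewrite mul0r subr0. Qed.

Lemma c_normK (z : R[i]) : `|z| = (complex.Re `|z|)%:C.
Proof. by rewrite normc_def. Qed.

Lemma c_rp_le (z : R[i]) : complex.Re z <= complex.Re `|z|.
Proof.
have := normc_ge_Re z; rewrite c_normK lecR; exact: le_trans (ler_norm _).
Qed.

Lemma c_RP (z : R[i]) (a : R) : complex.Re z = a -> `|z| <= a%:C -> z = a%:C.
Proof.
case: z => x y /= <-; rewrite normc_def lecR /= => h.
have x0 : 0 <= x by apply: le_trans h; exact: sqrtr_ge0.
move: h; rewrite -{2}(ger0_norm x0) -sqrtr_sqr ler_sqrt ?sqr_ge0 // => h.
have : y ^+ 2 <= 0 by lra.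
rewrite le_eqVlt ltNge sqr_ge0 orbF sqrf_eq0 => /eqP ->.
by [].
Qed.

Lemma c_ge0 (z : R[i]) : 0 <= z -> z = (complex.Re z)%:C.
Proof. by move=> h; have := ger0_Im h; case: z h => x y /= _ ->. Qed.

Lemma c_re_def (z : R[i]) : re_cplx z = (complex.Re z)%:C.
Proof. by rewrite /re_cplx ReJ_add Num.Theory.ReE. Qed.

Lemma c_CX (psi : X -> R) : (forall a u v, psi (a%:C *: u + v) = a * psi u + psi v) ->
  exists g : {scalar X}, forall v, complex.Re (g v) = psi v.
Proof.
move=> hp.
have c1 : (1 : R)%:C = 1 by [].
have p0 : psi 0 = 0.
  have := hp 1 0 0; rewrite scaler0 !addr0 mul1r => h.
  by apply: (addrI (psi 0)); rewrite -h addr0.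
have pD u v : psi (u + v) = psi u + psi v by have := hp 1 u v; rewrite c1 scale1r mul1r.
have pZ a u : psi (a%:C *: u) = a * psi u by have := hp a u 0; rewrite !addr0 p0 addr0.
have ha (b : R[i]) (u : X) : b *: u = (complex.Re b)%:C *: u + (complex.Im b)%:C *: ('i *: u).
  by rewrite scalerA -scalerDl (mulrC _ 'i) -complexE.
pose F v := (psi v)%:C - 'i * (psi ('i *: v))%:C.
have Flin a u v : F (a *: u + v) = a * F u + F v.
  rewrite /F scalerDr !pD scalerA (ha a u) (ha ('i%C * a) u) !pD !pZ.
  case: a => a1 a2 /=.
  apply/eqP; rewrite eq_complex /=; apply/andP; split; apply/eqP; ring.
have [g hg] := mk_scalar Flin.
exists g => v; rewrite hg /F /=; ring.
Qed.

Lemma c_NL (L : X -> R[i]) : (forall a u v, L (a *: u + v) = a * L u + L v) ->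
  forall c : R, (forall v, `|complex.Re (L v)| <= c * complex.Re `|v|) ->
  forall v, `|L v| <= c%:C * `|v|.
Proof.
move=> hL c hc v.
have L0 : L 0 = 0.
  have := hL 1 0 0; rewrite scaler0 !addr0 mul1r => h.
  by apply: (addrI (L 0)); rewrite -h addr0.
have LZ a u : L (a *: u) = a * L u by have := hL a u 0; rewrite !addr0 L0 addr0.
have [->|v0] := eqVneq v 0; first by rewrite L0 !normr0 mulr0.
have nv : 0 < complex.Re `|v|.
  by have := normr_gt0 v; rewrite v0 (c_ge0 (normr_ge0 v)) ltcR.
have c0 : 0 <= c.
  have := hc v; have := normr_ge0 (complex.Re (L v)) => h1 h2.
  have := le_trans h1 h2; rewrite pmulr_lge0 //.
have [w0|wn0] := eqVneq (L v) 0.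
  by rewrite w0 normr0 mulr_ge0 // ler0c.
set w := L v in wn0 *.
have nw : `|w| != 0 by rewrite normr_eq0.
pose u := (w^*%C / `|w|).
have uw : u * w = `|w|.
  by rewrite /u mulrAC (mulrC _ w) -sqr_normc expr2 mulfK.
have un : `|u| = 1 by rewrite /u normrM normfV normcJ normr_id mulfV.
have := hc (u *: v); rewrite LZ -/w uw normrZ un mul1r => h.
rewrite [`|w|]c_normK [`|v|](c_ge0 (normr_ge0 v)) -rmorphM lecR.
by apply: le_trans (ler_norm _) h.
Qed.

End Cplx.

Lemma complex_case (R : realType) (X : completeNormedModType R[i]) :
  (forall x : X, `|x| = 1 -> @strongly_exposed_point R[i] X (@re_cplx R) x) ->
  @property_P R[i] X (@re_cplx R).
Proof.
apply: (@gen_main R R[i] X (real_complex R) (@complex.Re R) (@re_cplx R)).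
- exact: lecR.
- exact: c_norm.
- by [].
- exact: c_rpD.
- exact: c_rpM.
- exact: c_normK.
- exact: c_rp_le.
- exact: c_re_def.
- exact: c_RP.
- exact: c_CX.
- exact: c_NL.
Qed.

Theorem proposition3p11 :
  (forall (R : realType) (X : completeNormedModType R),
     (forall x : X, `|x| = 1 -> @strongly_exposed_point R X (@re_real R) x) ->
     @property_P R X (@re_real R)) /\
  (forall (R : realType) (X : completeNormedModType R[i]),
     (forall x : X, `|x| = 1 -> @strongly_exposed_point R[i] X (@re_cplx R) x) ->
     @property_P R[i] X (@re_cplx R)).
Proof. split; [exact: real_case|exact: complex_case]. Qed.
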